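(* (a) If $\xi_1(\beta)\le C<\frac{\beta u_0}{r}$, then the function $$f_C(z)=\frac{\beta u_0}{r}-\frac{\frac{\beta u_0}{r}-C}{e^{\alpha_1d}+\frac{\alpha_1}{\alpha_2}e^{-\alpha_2d}}\Big(e^{\alpha_1z}+\frac{\alpha_1}{\alpha_2}e^{-\alpha_2z}\Big),\quad z\in[0,d],$$ solves Problem 1 with $f_C'(0)=0$ and $f_C(d)=C$. (b) If $\frac{\beta u_0-1}{r}<C\le\xi_2(\beta)$, then the function $$g_C(z)=\frac{\beta u_0-1}{r}+\Big(C-\frac{\beta u_0-1}{r}\Big)e^{-\alpha_2(z-d)},\quad z\in[d,\infty),$$ solves Problem 2 with $g_C(d)=C$ and $g_C$ bounded.
   Context: Fix $\mu\in\mathbb R$, $\sigma>0$, $u_0>0$, $r>0$, $\beta>0$, $d>0$. For $u\in[0,u_0]$ let $\theta_1(u)=\frac{\sqrt{(\mu-u)^2+2r\sigma^2}+(\mu-u)}{\sigma^2}$, $\theta_2(u)=\frac{\sqrt{(\mu-u)^2+2r\sigma^2}-(\mu-u)}{\sigma^2}$; $\alpha_1=\theta_1(u_0)$, $\alpha_2=\theta_2(u_0)$. Let $\xi_1(\beta)=\frac{\beta u_0}{r}-\beta\frac{e^{\alpha_1d}+\frac{\alpha_1}{\alpha_2}e^{-\alpha_2d}}{\alpha_1(e^{\alpha_1d}-e^{-\alpha_2d})}$ and $\xi_2(\beta)=\frac{\beta u_0-1}{r}+\frac{\beta}{\alpha_2}$. Problem 1: a bounded twice continuously differentiable function $f$ on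 $[0,d]$ satisfying $-rf(z)-\mu f'(z)+\frac{\sigma^2}{2}f''(z)+\sup_{u\in[0,u_0]}\{(\beta+f'(z))u\}=0$ for $z\in[0,d]$ (with one-sided derivatives at the endpoints). Problem 2: a bounded twice continuously differentiable function $g$ on $[d,\infty)$ satisfying $-rg(z)-\mu g'(z)+\frac{\sigma^2}{2}g''(z)+\sup_{u\in[0,u_0]}\{(\beta+g'(z))u\}=1$ for $z\ge d$. *)

(* Defs.v *)
From Stdlib Require Import Reals Lra.
From Coquelicot Require Import Coquelicot.
Open Scope R_scope.

Definition theta1 (mu sigma r u : R) : R :=
  (sqrt ((mu - u)^2 + 2 * r * sigma^2) + (mu - u)) / sigma^2.
Definition theta2 (mu sigma r u : R) : R :=
  (sqrt ((mu - u)^2 + 2 * r * sigma^2) - (mu - u)) / sigma^2.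

Definition alpha1 (mu sigma u0 r : R) : R := theta1 mu sigma r u0.
Definition alpha2 (mu sigma u0 r : R) : R := theta2 mu sigma r u0.

Definition xi1 (mu sigma u0 r beta d : R) : R :=
  let a1 := alpha1 mu sigma u0 r in let a2 := alpha2 mu sigma u0 r in
  beta * u0 / r
  - beta * (exp (a1 * d) + a1 / a2 * exp (- a2 * d))
      / (a1 * (exp (a1 * d) - exp (- a2 * d))).

Definition xi2 (mu sigma u0 r beta : R) : R :=
  (beta * u0 - 1) / r + beta / alpha2 mu sigma u0 r.

(* Derivative of f at z relative to the set D (one-sided at endpoints of an
   interval D). *)
Definition has_deriv_within (D : R -> Prop) (f : R -> R) (z l : R) : Prop :=
  forall eps : R, 0 < eps -> exists delta : R, 0 < delta /\
    forall y : R, D y -> y <> z -> Rabs (y - z) < delta ->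
      Rabs ((f y - f z) / (y - z) - l) < eps.

Definition continuous_within (D : R -> Prop) (f : R -> R) (z : R) : Prop :=
  forall eps : R, 0 < eps -> exists delta : R, 0 < delta /\
    forall y : R, D y -> Rabs (y - z) < delta -> Rabs (f y - f z) < eps.

Definition bounded_on (D : R -> Prop) (f : R -> R) : Prop :=
  exists M : R, forall z : R, D z -> Rabs (f z) <= M.

Definition C2_on (D : R -> Prop) (f f1 f2 : R -> R) : Prop :=
  forall z : R, D z ->
    has_deriv_within D f z (f1 z) /\ has_deriv_within D f1 z (f2 z) /\
    continuous_within D f2 z.

Definition sup_ctrl (u0 p : R) : R :=
  real (Lub_Rbar (fun y => exists u : R, 0 <= u <= u0 /\ y = p * u)).

Definition solves_HJB (mu sigma u0 r beta rhs : R) (D : R -> Prop)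
    (f f1 f2 : R -> R) : Prop :=
  bounded_on D f /\ C2_on D f f1 f2 /\
  forall z : R, D z ->
    - r * f z - mu * f1 z + sigma^2 / 2 * f2 z + sup_ctrl u0 (beta + f1 z) = rhs.

Definition Dom1 (d : R) : R -> Prop := fun z => 0 <= z <= d.
Definition Dom2 (d : R) : R -> Prop := fun z => d <= z.

Definition Problem1 mu sigma u0 r beta d (f f1 f2 : R -> R) : Prop :=
  solves_HJB mu sigma u0 r beta 0 (Dom1 d) f f1 f2.
Definition Problem2 mu sigma u0 r beta d (g g1 g2 : R -> R) : Prop :=
  solves_HJB mu sigma u0 r beta 1 (Dom2 d) g g1 g2.

Definition fC (mu sigma u0 r beta d C : R) (z : R) : R :=
  let a1 := alpha1 mu sigma u0 r in let a2 := alpha2 mu sigma u0 r in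
  beta * u0 / r
  - (beta * u0 / r - C) / (exp (a1 * d) + a1 / a2 * exp (- a2 * d))
    * (exp (a1 * z) + a1 / a2 * exp (- a2 * z)).

Definition gC (mu sigma u0 r beta d C : R) (z : R) : R :=
  let a2 := alpha2 mu sigma u0 r in
  (beta * u0 - 1) / r + (C - (beta * u0 - 1) / r) * exp (- a2 * (z - d)).

(* Main.v *)
Require Import Defs.
From Stdlib Require Import Reals Lra.
From Coquelicot Require Import Coquelicot.
Open Scope R_scope.

Lemma sup_ctrl_pos u0 p : 0 <= u0 -> 0 <= p -> sup_ctrl u0 p = p * u0.
Proof.
  intros Hu Hp. unfold sup_ctrl.
  rewrite (is_lub_Rbar_unique _ (p*u0)); [reflexivity|].
  split.
  - intros y [u [Hu' ->]]. simpl. apply Rmult_le_compat_l; lra.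
  - intros b Hb. apply Hb. exists u0. split; [lra|ring].
Qed.

Lemma deriv_within D f z l : is_derive f z l -> has_deriv_within D f z l.
Proof.
  intros H. apply is_derive_Reals in H.
  intros eps Heps. destruct (H eps Heps) as [del Hd].
  exists del. split; [apply cond_pos|].
  intros y _ Hyz Hy.
  replace y with (z + (y - z)) at 1 by ring.
  apply Hd; [lra|exact Hy].
Qed.

Lemma deriv_cont D f z l : has_deriv_within D f z l -> continuous_within D f z.
Proof.
  intros H eps Heps. destruct (H 1 Rlt_0_1) as [del [Hdel Hd]].
  assert (Hl : 0 < Rabs l + 1) by (pose proof (Rabs_pos l); lra).
  exists (Rmin del (eps / (Rabs l + 1))). split.
  { apply Rmin_pos; [lra|apply Rdiv_lt_0_compat; lra]. }
  intros y Dy Hy.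
  destruct (Req_dec y z) as [->|Hne].
  { rewrite Rminus_eq_0, Rabs_R0; lra. }
  assert (Hy1 : Rabs (y - z) < del) by (eapply Rlt_le_trans; [exact Hy|apply Rmin_l]).
  assert (Hy2 : Rabs (y - z) < eps / (Rabs l + 1)) by (eapply Rlt_le_trans; [exact Hy|apply Rmin_r]).
  specialize (Hd y Dy Hne Hy1).
  assert (Hq : Rabs ((f y - f z) / (y - z)) <= Rabs l + 1).
  { pose proof (Rabs_triang ((f y - f z) / (y - z) - l) l).
    replace ((f y - f z) / (y - z) - l + l) with ((f y - f z) / (y - z)) in H0 by ring. lra. }
  replace (f y - f z) with ((f y - f z) / (y - z) * (y - z)) by (field; lra).
  rewrite Rabs_mult.
  assert (Hp : 0 < Rabs (y - z)) by (apply Rabs_pos_lt; lra).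
  apply Rle_lt_trans with ((Rabs l + 1) * Rabs (y - z)).
  { apply Rmult_le_compat_r; lra. }
  apply Rlt_le_trans with ((Rabs l + 1) * (eps / (Rabs l + 1))).
  { apply Rmult_lt_compat_l; lra. }
  right; field; lra.
Qed.

Lemma alpha_facts mu sigma u0 r : 0 < sigma -> 0 < r ->
  let a1 := alpha1 mu sigma u0 r in let a2 := alpha2 mu sigma u0 r in
  0 < a1 /\ 0 < a2 /\
  sigma^2/2 * a1^2 - (mu - u0) * a1 - r = 0 /\
  sigma^2/2 * a2^2 + (mu - u0) * a2 - r = 0.
Proof.
  intros Hs Hr a1 a2. unfold a1, a2, alpha1, alpha2, theta1, theta2.
  set (m := mu - u0).
  set (S := sqrt (m ^ 2 + 2 * r * sigma ^ 2)).
  assert (Hp : 0 < 2 * r * sigma ^ 2) by (apply Rmult_lt_0_compat; [lra|apply pow_lt; lra]).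
  assert (HS2 : S * S = m ^ 2 + 2 * r * sigma ^ 2).
  { unfold S. apply sqrt_sqrt. pose proof (pow2_ge_0 m). lra. }
  assert (HS0 : 0 <= S) by apply sqrt_pos.
  assert (HSm : Rabs m < S).
  { apply Rsqr_incrst_0; [|apply Rabs_pos|lra]. rewrite <- Rsqr_abs. unfold Rsqr. rewrite HS2. simpl. lra. }
  assert (Hs2 : 0 < sigma ^ 2) by (apply pow_lt; lra).
  pose proof (Rle_abs m). pose proof (Rle_abs (-m)). rewrite Rabs_Ropp in H0.
  repeat split.
  - apply Rdiv_lt_0_compat; lra.
  - apply Rdiv_lt_0_compat; lra.
  - field_simplify; [|lra]. replace (S^2) with (S*S) by ring. rewrite HS2. field_simplify; lra.
  - field_simplify; [|lra]. replace (S^2) with (S*S) by ring. rewrite HS2. field_simplify; lra.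
Qed.

Lemma exp_le_mono x y : x <= y -> exp x <= exp y.
Proof. intros [H|H]; [left; apply exp_increasing; exact H|right; subst; reflexivity]. Qed.

Theorem proposition4p2 (mu sigma u0 r beta d : R)
  (Hsigma : 0 < sigma) (Hu0 : 0 < u0) (Hr : 0 < r) (Hbeta : 0 < beta) (Hd : 0 < d) :
  (forall C : R, xi1 mu sigma u0 r beta d <= C -> C < beta * u0 / r ->
     exists f1 f2 : R -> R,
       Problem1 mu sigma u0 r beta d (fC mu sigma u0 r beta d C) f1 f2 /\
       f1 0 = 0 /\ fC mu sigma u0 r beta d C d = C) /\
  (forall C : R, (beta * u0 - 1) / r < C -> C <= xi2 mu sigma u0 r beta ->
     exists g1 g2 : R -> R,
       Problem2 mu sigma u0 r beta d (gC mu sigma u0 r beta d C) g1 g2 /\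
       gC mu sigma u0 r beta d C d = C /\
       bounded_on (Dom2 d) (gC mu sigma u0 r beta d C)).
Proof.
  destruct (alpha_facts mu sigma u0 r Hsigma Hr) as [Ha1 [Ha2 [Q1 Q2]]].
  unfold Problem1, Problem2, solves_HJB, xi1, xi2, fC, gC in *.
  set (a1 := alpha1 mu sigma u0 r) in *.
  set (a2 := alpha2 mu sigma u0 r) in *.
  split.
  - intros C HC1 HC2.
    set (K := beta * u0 / r) in *.
    set (E := exp (a1 * d) + a1 / a2 * exp (- a2 * d)).
    assert (HE : 0 < E).
    { unfold E. pose proof (exp_pos (a1*d)). pose proof (exp_pos (-a2*d)).
      assert (0 < a1/a2) by (apply Rdiv_lt_0_compat; lra). nra. }
    set (B := (K - C) / E).
    assert (HB : 0 < B) by (apply Rdiv_lt_0_compat; lra).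
    set (f := fun z => K - B * (exp (a1 * z) + a1 / a2 * exp (- a2 * z))).
    exists (fun z => - B * a1 * (exp (a1 * z) - exp (- a2 * z))).
    exists (fun z => - B * a1 * (a1 * exp (a1 * z) + a2 * exp (- a2 * z))).
    fold B. fold f.
    assert (D1 : forall z : R, is_derive f z (- B * a1 * (exp (a1 * z) - exp (- a2 * z)))).
    { intro z. unfold f. auto_derive; [auto|field; lra]. }
    assert (D2 : forall z : R, is_derive (fun z => - B * a1 * (exp (a1 * z) - exp (- a2 * z))) z
                   (- B * a1 * (a1 * exp (a1 * z) + a2 * exp (- a2 * z)))).
    { intro z. auto_derive; [auto|ring]. }
    assert (D3 : forall z : R, is_derive (fun z => - B * a1 * (a1 * exp (a1 * z) + a2 * exp (- a2 * z))) z
                   (- B * a1 * (a1 * a1 * exp (a1 * z) - a2 * a2 * exp (- a2 * z)))).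
    { intro z. auto_derive; [auto|ring]. }
    split; [split; [|split]|split].
    + exists (Rabs K + B * (exp (a1 * d) + a1 / a2)).
      intros z [Hz0 Hz1]. unfold f.
      assert (e1 : exp (a1 * z) <= exp (a1 * d)).
      { apply exp_le_mono. apply Rmult_le_compat_l; lra. }
      assert (e2 : exp (- a2 * z) <= 1).
      { rewrite <- exp_0. apply exp_le_mono. nra. }
      pose proof (exp_pos (a1*z)). pose proof (exp_pos (-a2*z)).
      assert (0 < a1/a2) by (apply Rdiv_lt_0_compat; lra).
      eapply Rle_trans; [apply Rabs_triang|]. rewrite Rabs_Ropp, Rabs_mult.
      rewrite (Rabs_pos_eq B) by lra. rewrite (Rabs_pos_eq (exp (a1 * z) + _)) by nra.
      apply Rplus_le_compat_l. apply Rmult_le_compat_l; [lra|]. nra.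
    + intros z _. split; [apply deriv_within, D1|split; [apply deriv_within, D2|]].
      eapply deriv_cont. apply deriv_within, D3.
    + intros z [Hz0 Hz1].
      rewrite sup_ctrl_pos; [|lra|].
      * unfold f, K. 
        replace (- r * (beta * u0 / r - B * (exp (a1 * z) + a1 / a2 * exp (- a2 * z))) -
          mu * (- B * a1 * (exp (a1 * z) - exp (- a2 * z))) +
          sigma ^ 2 / 2 * (- B * a1 * (a1 * exp (a1 * z) + a2 * exp (- a2 * z))) +
          (beta + - B * a1 * (exp (a1 * z) - exp (- a2 * z))) * u0)
        with (- B * exp (a1 * z) * (sigma ^ 2 / 2 * a1 ^ 2 - (mu - u0) * a1 - r)
              - B * a1 / a2 * exp (- a2 * z) * (sigma ^ 2 / 2 * a2 ^ 2 + (mu - u0) * a2 - r))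
          by (field; lra).
        rewrite Q1, Q2. ring.
      * assert (e1 : exp (a1 * z) <= exp (a1 * d)).
        { apply exp_le_mono. apply Rmult_le_compat_l; lra. }
        assert (e2 : exp (- a2 * d) <= exp (- a2 * z)).
        { apply exp_le_mono. nra. }
        assert (Hdd : exp (- a2 * d) < exp (a1 * d)) by (apply exp_increasing; nra).
        assert (Hb : B * (a1 * (exp (a1 * d) - exp (- a2 * d))) <= beta).
        { unfold B. apply (Rmult_le_reg_r (/ (a1 * (exp (a1 * d) - exp (- a2 * d))))).
          { apply Rinv_0_lt_compat. nra. }
          replace ((K - C) / E * (a1 * (exp (a1 * d) - exp (- a2 * d))) *
            / (a1 * (exp (a1 * d) - exp (- a2 * d)))) with ((K - C) / E) by (field; nra).
          apply (Rmult_le_reg_r E); [lra|].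
          replace ((K - C) / E * E) with (K - C) by (field; lra).
          unfold E. replace (beta * / (a1 * (exp (a1 * d) - exp (- a2 * d))) *
            (exp (a1 * d) + a1 / a2 * exp (- a2 * d))) with
            (beta * (exp (a1 * d) + a1 / a2 * exp (- a2 * d)) / (a1 * (exp (a1 * d) - exp (- a2 * d))))
            by (field; nra).
          fold E. fold E in HC1. lra. }
        assert (0 < B * a1) by nra. assert (B * a1 * (exp (a1 * z) - exp (- a2 * z)) <= B * a1 * (exp (a1 * d) - exp (- a2 * d))) by (apply Rmult_le_compat_l; lra). nra.
    + simpl. rewrite !Rmult_0_r, exp_0. ring.
    + unfold f, B. field. lra.
  - intros C HC1 HC2.
    set (L := (beta * u0 - 1) / r) in *.
    set (g := fun z => L + (C - L) * exp (- a2 * (z - d))).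
    exists (fun z => - a2 * (C - L) * exp (- a2 * (z - d))).
    exists (fun z => a2 * a2 * (C - L) * exp (- a2 * (z - d))).
    fold g.
    assert (D1 : forall z : R, is_derive g z (- a2 * (C - L) * exp (- a2 * (z - d)))).
    { intro z. unfold g. auto_derive; [auto|unfold Rminus; ring]. }
    assert (D2 : forall z : R, is_derive (fun z => - a2 * (C - L) * exp (- a2 * (z - d))) z
                   (a2 * a2 * (C - L) * exp (- a2 * (z - d)))).
    { intro z. auto_derive; [auto|unfold Rminus; ring]. }
    assert (D3 : forall z : R, is_derive (fun z => a2 * a2 * (C - L) * exp (- a2 * (z - d))) z
                   (- a2 * a2 * a2 * (C - L) * exp (- a2 * (z - d)))).
    { intro z. auto_derive; [auto|unfold Rminus; ring]. }
    assert (Bd : bounded_on (Dom2 d) g).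
    { exists (Rabs L + (C - L)). intros z Hz. unfold Dom2 in Hz. unfold g.
      assert (e2 : exp (- a2 * (z - d)) <= 1).
      { rewrite <- exp_0. apply exp_le_mono. nra. }
      pose proof (exp_pos (- a2 * (z - d))).
      eapply Rle_trans; [apply Rabs_triang|]. rewrite Rabs_mult.
      rewrite (Rabs_pos_eq (C - L)) by lra. rewrite (Rabs_pos_eq (exp _)) by lra. nra. }
    split; [split; [exact Bd|split]|split; [|exact Bd]].
    + intros z _. split; [apply deriv_within, D1|split; [apply deriv_within, D2|]].
      eapply deriv_cont. apply deriv_within, D3.
    + intros z Hz. unfold Dom2 in Hz.
      assert (e2 : exp (- a2 * (z - d)) <= 1).
      { rewrite <- exp_0. apply exp_le_mono. nra. }
      pose proof (exp_pos (- a2 * (z - d))).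
      rewrite sup_ctrl_pos; [|lra|].
      * unfold g, L.
        replace (- r * ((beta * u0 - 1) / r + (C - (beta * u0 - 1) / r) * exp (- a2 * (z - d))) -
          mu * (- a2 * (C - (beta * u0 - 1) / r) * exp (- a2 * (z - d))) +
          sigma ^ 2 / 2 * (a2 * a2 * (C - (beta * u0 - 1) / r) * exp (- a2 * (z - d))) +
          (beta + - a2 * (C - (beta * u0 - 1) / r) * exp (- a2 * (z - d))) * u0)
        with (1 + (C - (beta * u0 - 1) / r) * exp (- a2 * (z - d)) *
                (sigma ^ 2 / 2 * a2 ^ 2 + (mu - u0) * a2 - r)) by (field; lra).
        rewrite Q2. ring.
      * assert (a2 * (C - L) <= beta).
        { assert (C - L <= beta / a2) by lra.
          apply (Rmult_le_compat_l a2) in H0; [|lra].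
          replace (a2 * (beta / a2)) with beta in H0 by (field; lra). lra. }
        nra.
    + unfold g. rewrite Rminus_eq_0, Rmult_0_r, exp_0. ring.
Qed.
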